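(* Let $F$ be a commutative ring and $R$ an $F$-algebra with a descending filtration of ideals $R=I_0\supseteq I_1\supseteq I_2\supseteq\cdots$ such that $R/I_s$ is an artinian $F$-algebra for every $s$. Let $\overline{R}=\varprojlim R/I_j$ be the completion, with the inverse limit topology in which each $R/I_j$ is discrete. Then every finitely generated left ideal and every finitely generated right ideal of $\overline{R}$ is closed.
   Context: A descending filtration of $R$ is a sequence of ideals $R=I_0\supseteq I_1\supseteq\cdots$ with $\bigcap_t I_t=0$ and $I_sI_t\subseteq I_{s+t}$ for all $s,t$. $\overline{R}$ is a Hausdorff topological ring. *)

(* Defs.v *)
From HB Require Import structures.
From mathcomp Require Import all_boot all_order all_algebra.
Set Implicit Arguments. Unset Strict Implicit. Unset Printing Implicit Defensive.
Import GRing.Theory.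
Local Open Scope ring_scope.

Definition is_left_ideal (R : ringType) (L : R -> Prop) : Prop :=
  L 0 /\ (forall x y, L x -> L y -> L (x - y)) /\ (forall r x, L x -> L (r * x)).

Definition is_right_ideal (R : ringType) (L : R -> Prop) : Prop :=
  L 0 /\ (forall x y, L x -> L y -> L (x - y)) /\ (forall r x, L x -> L (x * r)).

Definition is_ideal (R : ringType) (L : R -> Prop) : Prop :=
  is_left_ideal L /\ is_right_ideal L.

Definition is_filtration (R : ringType) (I : nat -> R -> Prop) : Prop :=
  [/\ forall t, is_ideal (I t),
      forall x, I 0%N x,
      forall t x, I t.+1 x -> I t x,
      forall x, (forall t, I t x) -> x = 0
    & forall s t x y, I s x -> I t y -> I (s + t)%N (x * y)].

(* R/J is left artinian, expressed via the correspondence between left ideals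
   of R/J and left ideals of R containing J: every descending chain of such
   left ideals stabilizes. *)
Definition left_artinian_quot (R : ringType) (J : R -> Prop) : Prop :=
  forall L : nat -> R -> Prop,
    (forall k, is_left_ideal (L k)) ->
    (forall k x, J x -> L k x) ->
    (forall k x, L k.+1 x -> L k x) ->
    exists k0, forall k, (k0 <= k)%N -> forall x, L k x <-> L k0 x.

Definition right_artinian_quot (R : ringType) (J : R -> Prop) : Prop :=
  forall L : nat -> R -> Prop,
    (forall k, is_right_ideal (L k)) ->
    (forall k x, J x -> L k x) ->
    (forall k x, L k.+1 x -> L k x) ->
    exists k0, forall k, (k0 <= k)%N -> forall x, L k x <-> L k0 x.

(* The completion Rbar = lim R/I_j: an element is represented by a sequence
   x : nat -> R with x_{j+1} = x_j mod I_j (x_j represents the component in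
   R/I_j); two representatives give the same element iff x_j = y_j mod I_j
   for all j. *)
Definition compat (R : ringType) (I : nat -> R -> Prop) (x : nat -> R) : Prop :=
  forall j, I j (x j.+1 - x j).

Definition ceq (R : ringType) (I : nat -> R -> Prop) (x y : nat -> R) : Prop :=
  forall j, I j (x j - y j).

(* Closedness in the inverse limit topology (each R/I_j discrete): a basic
   neighbourhood of x is {y | y_s = x_s mod I_s}; S is closed iff it contains
   every point of Rbar all of whose neighbourhoods meet S. *)
Definition closed_Rbar (R : ringType) (I : nat -> R -> Prop)
    (S : (nat -> R) -> Prop) : Prop :=
  forall x, compat I x ->
    (forall s, exists y, [/\ compat I y, S y & I s (y s - x s)]) -> S x.

Definition fg_left_ideal (R : ringType) (I : nat -> R -> Prop) (n : nat)
    (a : 'I_n -> nat -> R) : (nat -> R) -> Prop :=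
  fun y => exists r : 'I_n -> nat -> R, (forall i, compat I (r i)) /\
    ceq I y (fun j => \sum_(i < n) r i j * a i j).

Definition fg_right_ideal (R : ringType) (I : nat -> R -> Prop) (n : nat)
    (a : 'I_n -> nat -> R) : (nat -> R) -> Prop :=
  fun y => exists r : 'I_n -> nat -> R, (forall i, compat I (r i)) /\
    ceq I y (fun j => \sum_(i < n) a i j * r i j).

(* Main.v *)
Require Import Defs.
From HB Require Import structures.
From mathcomp Require Import all_boot all_order all_algebra.
From Stdlib Require Import FunctionalExtensionality ClassicalEpsilon.
Set Implicit Arguments. Unset Strict Implicit. Unset Printing Implicit Defensive.
Import GRing.Theory.
Local Open Scope ring_scope.

Section Helpers.
End Helpers.

Lemma J0 (R : ringType) (J : R -> Prop) : is_left_ideal J -> J 0.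
Proof. by case. Qed.

Lemma Jsub (R : ringType) (J : R -> Prop) : is_left_ideal J ->
  forall x y, J x -> J y -> J (x - y).
Proof. by case=> _ []. Qed.

Lemma Jopp (R : ringType) (J : R -> Prop) : is_left_ideal J ->
  forall x, J x -> J (- x).
Proof. move=> hJ x hx; rewrite -sub0r; apply: Jsub => //; exact: J0. Qed.

Lemma Jadd (R : ringType) (J : R -> Prop) : is_left_ideal J ->
  forall x y, J x -> J y -> J (x + y).
Proof. move=> hJ x y hx hy; rewrite -[y]opprK; apply: Jsub => //; exact: Jopp. Qed.

Lemma Jmull (R : ringType) (J : R -> Prop) : is_left_ideal J ->
  forall c x, J x -> J (c * x).
Proof. by case=> _ []. Qed.

Lemma Jsum (R : ringType) (J : R -> Prop) : is_left_ideal J ->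
  forall n (F : 'I_n -> R), (forall i, J (F i)) -> J (\sum_(i < n) F i).
Proof.
move=> hJ n F hF; apply: (big_ind J); [exact: J0|exact: Jadd|by move=> i _].
Qed.

Lemma cong_refl (R : ringType) (J : R -> Prop) : is_left_ideal J ->
  forall u, J (u - u).
Proof. by move=> hJ u; rewrite subrr; apply: J0. Qed.

Lemma cong_sym (R : ringType) (J : R -> Prop) : is_left_ideal J ->
  forall u v, J (u - v) -> J (v - u).
Proof. by move=> hJ u v h; rewrite -opprB; apply: Jopp. Qed.

Lemma cong_trans (R : ringType) (J : R -> Prop) : is_left_ideal J ->
  forall u v w, J (u - v) -> J (v - w) -> J (u - w).
Proof.
move=> hJ u v w h1 h2.
have -> : u - w = (u - v) + (v - w) by rewrite addrA subrK.
exact: Jadd.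
Qed.

Lemma cong_add (R : ringType) (J : R -> Prop) : is_left_ideal J ->
  forall u u' v v', J (u - u') -> J (v - v') -> J ((u + v) - (u' + v')).
Proof. by move=> hJ u u' v v' h1 h2; rewrite opprD addrACA; apply: Jadd. Qed.

Lemma cong_opp (R : ringType) (J : R -> Prop) : is_left_ideal J ->
  forall u v, J (u - v) -> J (- u - - v).
Proof. by move=> hJ u v h; rewrite opprK addrC; apply: cong_sym. Qed.

Lemma cong_sub (R : ringType) (J : R -> Prop) : is_left_ideal J ->
  forall u u' v v', J (u - u') -> J (v - v') -> J ((u - v) - (u' - v')).
Proof. by move=> hJ u u' v v' h1 h2; apply: cong_add => //; apply: cong_opp. Qed.

Lemma cong_mull (R : ringType) (J : R -> Prop) : is_left_ideal J ->
  forall c u v, J (u - v) -> J (c * u - c * v).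
Proof. by move=> hJ c u v h; rewrite -mulrBr; apply: Jmull. Qed.

Lemma cong_mulr (R : ringType) (J : R -> Prop) : is_ideal J ->
  forall c u v, J (u - v) -> J (u * c - v * c).
Proof. by move=> [_ [_ [_ hr]]] c u v h; rewrite -mulrBl; apply: hr. Qed.

Lemma cong_sum (R : ringType) (J : R -> Prop) : is_left_ideal J ->
  forall n (F G : 'I_n -> R), (forall i, J (F i - G i)) ->
  J (\sum_(i < n) F i - \sum_(i < n) G i).
Proof. by move=> hJ n F G h; rewrite -sumrB; apply: Jsum. Qed.

Lemma stepdown (P : nat -> Prop) : (forall t, P t.+1 -> P t) ->
  forall t t', (t <= t')%N -> P t' -> P t.
Proof.
move=> hP t t'; elim: t' => [|t' IH]; first by rewrite leqn0 => /eqP ->.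
rewrite leq_eqVlt => /orP [/eqP -> //|]; rewrite ltnS => h1 h2.
by apply: IH => //; apply: hP.
Qed.

Definition submod (R : ringType) (M : (nat -> R) -> Prop) :=
  M (fun _ => 0) /\ (forall u v, M u -> M v -> M (fun i => u i - v i)) /\
  (forall c u, M u -> M (fun i => c * u i)).

Lemma art_vec (R : ringType) (J : R -> Prop) (hJ0 : J 0)
  (hart : left_artinian_quot J) :
  forall n (M : nat -> (nat -> R) -> Prop), (forall k, submod (M k)) ->
  (forall k v, (forall i, (i < n)%N -> J (v i)) -> M k v) ->
  (forall k v, M k.+1 v -> M k v) ->
  exists k0, forall k, (k0 <= k)%N -> forall v, M k v <-> M k0 v.
Proof.
elim=> [|n IH] M hM hJ hD.
  by exists 0%N => k _ v; split => _; apply: hJ.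
have desc : forall k j v, (j <= k)%N -> M k v -> M j v.
  move=> k j v hjk; apply: (stepdown (P := fun k => M k v)) => // t; exact: hD.
pose L k c := exists v, M k v /\ v n = c.
pose N k v := M k (fun i => if i == n then 0 else v i).
have [k1 hk1] : exists k1, forall k, (k1 <= k)%N -> forall c, L k c <-> L k1 c.
  apply: hart.
  - move=> k; split; last split.
    + by exists (fun _ => 0); split => //; case: (hM k).
    + move=> c1 c2 [v1 [h1 e1]] [v2 [h2 e2]]; exists (fun i => v1 i - v2 i).
      by split; [case: (hM k) => _ [hs _]; apply: hs|rewrite e1 e2].
    + move=> r c [v [h e]]; exists (fun i => r * v i).
      by split; [case: (hM k) => _ [_ hs]; apply: hs|rewrite e].
  - move=> k c hc; exists (fun i => if i == n then c else 0); split => //=; last by rewrite eqxx.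
    by apply: hJ => i _; case: (i == n).
  - by move=> k c [v [h e]]; exists v; split => //; apply: hD.
have [k2 hk2] : exists k2, forall k, (k2 <= k)%N -> forall v, N k v <-> N k2 v.
  apply: IH.
  - move=> k; case: (hM k) => h0 [hs hm]; split; last split.
    + by rewrite /N (_ : (fun i => _) = fun _ => 0) //; apply: functional_extensionality => i; case: (i == n).
    + move=> u v hu hv; rewrite /N.
      rewrite (_ : (fun i => _) = (fun i => (if i == n then 0 else u i) - (if i == n then 0 else v i))); first exact: hs.
      by apply: functional_extensionality => i; case: (i == n); rewrite ?subr0.
    + move=> c u hu; rewrite /N.
      rewrite (_ : (fun i => _) = (fun i => c * (if i == n then 0 else u i))); first exact: hm.
      by apply: functional_extensionality => i; case: (i == n); rewrite ?mulr0.
  - move=> k v hv; apply: hJ => i hi; case: eqP => [//|/eqP hne]; apply: hv.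
    by rewrite ltn_neqAle hne -ltnS.
  - by move=> k v; apply: hD.
exists (maxn k1 k2) => k hk v; split; first by apply: desc.
move=> hv.
have hk1k : (k1 <= k)%N by apply: leq_trans hk; apply: leq_maxl.
have hk2k : (k2 <= k)%N by apply: leq_trans hk; apply: leq_maxr.
have : L k (v n).
  apply/(hk1 _ hk1k)/(hk1 _ (leq_maxl k1 k2)); by exists v.
move=> [w [hw ew]].
case: (hM (maxn k1 k2)) => _ [hs0 _].
pose u := fun i => v i - w i.
have hu0 : M (maxn k1 k2) u by apply: hs0 => //; apply: desc hw.
have eu : (fun i => if i == n then 0 else u i) = u.
  apply: functional_extensionality => i; case: eqP => [->|//].
  by rewrite /u ew subrr.
have hNu : N (maxn k1 k2) u by rewrite /N eu.
have : N k u by apply/(hk2 _ hk2k)/(hk2 _ (leq_maxr k1 k2)).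
rewrite /N eu => huk.
case: (hM k) => h0 [hs _].
have := hs _ _ huk (hs _ _ h0 hw).
rewrite (_ : (fun i => _) = v) //.
by apply: functional_extensionality => i; rewrite /u sub0r opprK subrK.
Qed.

Lemma left_closed (R : ringType) (I : nat -> R -> Prop) (hI : is_filtration I)
  (hart : forall s, left_artinian_quot (I s)) n (a : 'I_n -> nat -> R)
  (ha : forall i, compat I (a i)) : closed_Rbar I (fg_left_ideal I a).
Proof.
case: hI => hid h0 hdesc hsep hmul.
have hl : forall t, is_left_ideal (I t) by move=> t; case: (hid t).
move=> x hx hxs.
pose Sol t (r : 'I_n -> R) := I t (x t - \sum_(i < n) r i * a i t).
pose Syz t (z : 'I_n -> R) := I t (\sum_(i < n) z i * a i t - 0).
pose H s t (v : 'I_n -> R) := exists z, Syz t z /\ forall i, I s (z i - v i).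
pose E s t (e : 'I_n -> R) := exists r, Sol t r /\ forall i, I s (r i - e i).
pose good s e := forall t, E s t e.
have Imono : forall s t y, (s <= t)%N -> I t y -> I s y.
  move=> s t y hst; apply: (stepdown (P := fun t => I t y)) => // u; exact: hdesc.
have sumstep : forall t (r : 'I_n -> R),
    I t (\sum_(i < n) r i * a i t.+1 - \sum_(i < n) r i * a i t).
  move=> t r; apply: cong_sum => // i; apply: cong_mull => //; exact: ha.
have SolS : forall t r, Sol t.+1 r -> Sol t r.
  move=> t r h; rewrite /Sol.
  apply: (cong_trans (hl t) (v := x t.+1)); first by apply: cong_sym => //; exact: hx.
  apply: (cong_trans (hl t) (v := \sum_(i < n) r i * a i t.+1)); last exact: sumstep.
  exact: hdesc.
have SyzS : forall t z, Syz t.+1 z -> Syz t z.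
  move=> t z h; rewrite /Syz.
  apply: (cong_trans (hl t) (v := \sum_(i < n) z i * a i t.+1)); last exact: hdesc.
  by apply: cong_sym => //; exact: sumstep.
have SolM : forall t t' r, (t <= t')%N -> Sol t' r -> Sol t r.
  move=> t t' r htt'; apply: (stepdown (P := fun t => Sol t r)) => // u; exact: SolS.
have nonempty : forall t, exists f, Sol t f.
  move=> t; case: (hxs t) => y [hy [r [hr hc]] hyx].
  exists (fun i => r i t); rewrite /Sol.
  apply: (cong_trans (hl t) (v := y t)); first by apply: cong_sym.
  exact: hc.
have stab : forall s, exists N, forall t, (N <= t)%N -> forall v, H s t v <-> H s N v.
  move=> s.
  have [k0 hk0] : exists k0, forall k, (k0 <= k)%N -> forall v : nat -> R,
      H s k (fun i : 'I_n => v i) <-> H s k0 (fun i : 'I_n => v i).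
    apply: (@art_vec R (I s) (J0 (hl s)) (hart s) n
     (fun k v => H s k (fun i : 'I_n => v i))).
  - move=> k; split; last split.
    + exists (fun _ => 0); split => [|i]; last exact: cong_refl.
      rewrite /Syz big1 ?subrr; [exact: J0|by move=> i _; rewrite mul0r].
    + move=> u v [z1 [hz1 e1]] [z2 [hz2 e2]]; exists (fun i => z1 i - z2 i); split.
      * rewrite /Syz (_ : \sum_(i < n) _ = \sum_(i < n) z1 i * a i k - \sum_(i < n) z2 i * a i k).
          by rewrite subr0; apply: Jsub => //; [move: hz1|move: hz2]; rewrite /Syz subr0.
        by rewrite -sumrB; apply: eq_bigr => i _; rewrite mulrBl.
      * by move=> i; apply: cong_sub.
    + move=> c u [z [hz e]]; exists (fun i => c * z i); split.
      * rewrite /Syz (_ : \sum_(i < n) _ = c * \sum_(i < n) z i * a i k).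
          by rewrite subr0; apply: Jmull => //; move: hz; rewrite /Syz subr0.
        by rewrite mulr_sumr; apply: eq_bigr => i _; rewrite mulrA.
      * by move=> i; apply: cong_mull.
  - move=> k v hv; exists (fun _ => 0); split.
      rewrite /Syz big1 ?subrr; [exact: J0|by move=> i _; rewrite mul0r].
    by move=> i; rewrite sub0r; apply: Jopp => //; apply: hv.
  - by move=> k v [z [hz e]]; exists z; split => //; apply: SyzS.
  exists k0 => t ht w.
  pose v := fun j : nat => if insub j is Some o then w o else 0.
  have ev : (fun i : 'I_n => v i) = w.
    by apply: functional_extensionality => i; rewrite /v valK.
  by have := hk0 t ht v; rewrite ev.
have stabE : forall s N, (forall t, (N <= t)%N -> forall v, H s t v <-> H s N v) ->
    forall t e, (N <= t)%N -> E s N e -> E s t e.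
  move=> s N hN t e hNt [r1 [hr1 hre]].
  have [f hf] := nonempty t.
  have hfN : Sol N f by apply: SolM hNt hf.
  have : H s N (fun i => r1 i - f i).
    exists (fun i => r1 i - f i); split; last by move=> i; apply: cong_refl.
    rewrite /Syz (_ : \sum_(i < n) _ = \sum_(i < n) r1 i * a i N - \sum_(i < n) f i * a i N).
      rewrite subr0; apply: (cong_trans (hl N) (v := x N)); first by apply: cong_sym.
      exact: hfN.
    by rewrite -sumrB; apply: eq_bigr => i _; rewrite mulrBl.
  move/(hN _ hNt) => [z [hz hzv]].
  exists (fun i => f i + z i); split.
    rewrite /Sol (_ : \sum_(i < n) _ = \sum_(i < n) f i * a i t + \sum_(i < n) z i * a i t).
      rewrite -[x t]addr0; apply: cong_add => //; apply: cong_sym => //.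
    by rewrite -big_split /=; apply: eq_bigr => i _; rewrite mulrDl.
  move=> i; apply: (cong_trans (hl s) (v := r1 i)) => //.
  have e1 : f i + (r1 i - f i) = r1 i by rewrite addrC subrK.
  rewrite -e1; apply: cong_add => //.
  exact: cong_refl.
have lift : forall s e, good s e -> exists e', good s.+1 e' /\ forall i, I s (e' i - e i).
  move=> s e he; have [N hN] := stab s.+1.
  have [r' [hr' hre]] := he N.
  exists r'; split => // t.
  case: (leqP t N) => htN.
    by exists r'; split; [apply: SolM htN hr'|move=> i; apply: cong_refl].
  apply: (stabE _ _ hN) => //; first exact: ltnW.
  by exists r'; split => // i; apply: cong_refl.
have good0 : good 0%N (fun _ => 0).
  move=> t; have [f hf] := nonempty t; exists f; split => // i; exact: h0.
have step : forall s (p : {e | good s e}),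
    {e' | good s.+1 e' /\ forall i, I s (e' i - sval p i)}.
  move=> s [e he]; apply: constructive_indefinite_description; exact: lift.
pose seqv := fix f s := match s return {e | good s e} with
  | 0%N => exist _ _ good0
  | S s' => let p := step s' (f s') in exist _ (sval p) (proj1 (svalP p)) end.
exists (fun i s => sval (seqv s) i); split.
  move=> i j; exact: (proj2 (svalP (step j (seqv j))) i).
move=> j /=.
have [r' [hr' hre]] := svalP (seqv j) j.
apply: (cong_trans (hl j) (v := \sum_(i < n) r' i * a i j)) => //.
apply: cong_sum => // i; apply: cong_mulr => //; exact: hre.
Qed.

Lemma filt_conv (R : ringType) (I : nat -> R -> Prop) :
  is_filtration I -> is_filtration (R := R^c) I.
Proof.
case=> hid h0 hdesc hsep hmul; split => //.
  by move=> t; case: (hid t) => hl hr; split.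
by move=> s t x y hx hy; rewrite addnC; apply: hmul.
Qed.

Theorem lemma4p2 (F : comNzRingType) (R : algType F) (I : nat -> R -> Prop)
  (hI : is_filtration I)
  (hart : forall s, left_artinian_quot (I s) /\ right_artinian_quot (I s)) :
  (forall (n : nat) (a : 'I_n -> nat -> R), (forall i, compat I (a i)) ->
     closed_Rbar I (fg_left_ideal I a)) /\
  (forall (n : nat) (a : 'I_n -> nat -> R), (forall i, compat I (a i)) ->
     closed_Rbar I (fg_right_ideal I a)).
Proof.
split=> n a ha.
  by apply: left_closed => // s; case: (hart s).
exact: (@left_closed R^c I (filt_conv hI) (fun s => proj2 (hart s)) n a ha).
Qed.
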